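(* If $G$ is a connected graph of maximum degree at most $3$, then $\gamma_e(G)\leq\frac{1}{3}(n(G)+2)$.
   Context: All graphs are finite, simple and undirected; $n(G)=|V(G)|$. For a graph $G$, a set $S\subseteq V(G)$, and vertices $u,v$ with $u\in S$ or $v\in S$, ${\rm dist}_{(G,S)}(u,v)$ is the minimum number of edges of a path $P$ in $G$ between $u$ and $v$ such that $S$ contains exactly one endvertex of $P$ and no internal vertex of $P$, and $\infty$ if no such path exists (so ${\rm dist}_{(G,S)}(u,u)=0$ for $u\in S$). For $u\in V(G)$, $w_{(G,S)}(u)=\sum_{v\in S}(1/2)^{{\rm dist}_{(G,S)}(u,v)-1}$ with $(1/2)^{\infty}=0$. $S$ is an exponential dominating set of $G$ if $w_{(G,S)}(u)\geq 1$ for every $u\in V(G)$, and $\gamma_e(G)$ is the minimum cardinality of an exponential dominating set of $G$. *)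

(* Defs.v *)
From HB Require Import structures.
From mathcomp Require Import all_boot all_order all_algebra.
Set Implicit Arguments. Unset Strict Implicit. Unset Printing Implicit Defensive.
Import Order.TTheory GRing.Theory Num.Theory.

(* A finite simple graph: vertex type T (finType), edge relation e that is
   symmetric and irreflexive. A path is x :: p with path e x p, uniq. *)

Section ExpDom.
Variables (T : finType) (e : rel T).

Definition internal (x : T) (p : seq T) : seq T := behead (belast x p).

(* x :: p is a path in G between u and v such that S contains exactly one
   endvertex of it (the endvertex set is {u, v}, so for u = v the trivial
   path counts when u \in S) and no internal vertex. *)
Definition good_path (S : {set T}) (u v : T) (x : T) (p : seq T) : bool :=
  [&& x == u, last x p == v, path e x p, uniq (x :: p),
      #|[set u; v] :&: S| == 1 & all (fun y => y \notin S) (internal x p)].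

Definition has_good_path (S : {set T}) (u v : T) (k : nat) : bool :=
  [exists t : k.-tuple T, good_path S u v u t].

(* dist_(G,S)(u,v): Some d = minimum length, None = infinity.
   (Simple paths have fewer than #|T| edges.) *)
Definition distS (S : {set T}) (u v : T) : option nat :=
  let k := find (has_good_path S u v) (iota 0 #|T|) in
  if k < #|T| then Some k else None.

Definition weight (S : {set T}) (u : T) : rat :=
  \sum_(v in S) match distS S u v with
                | Some d => ((1 / 2 : rat) ^ (d%:Z - 1))%R
                | None => 0%R
                end.

Definition exp_dominating (S : {set T}) : Prop :=
  forall u : T, (1 <= weight S u)%R.

End ExpDom.

(* Main.v *)
Require Import Defs.
From HB Require Import structures.
From mathcomp Require Import all_boot all_order all_algebra.
From mathcomp Require Import zify ring lra.
Set Implicit Arguments. Unset Strict Implicit. Unset Printing Implicit Defensive.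
Import Order.TTheory GRing.Theory Num.Theory.

Section W.
Variables (T : finType) (e : rel T).
Local Open Scope ring_scope.
Implicit Types (S A B : {set T}) (u v x y : T) (q : rat) (p : seq T).

Definition term (S : {set T}) (u v : T) : rat :=
  match distS e S u v with
  | Some d => ((1 / 2 : rat) ^ (d%:Z - 1))%R
  | None => 0%R
  end.

Lemma weightE S u : weight e S u = \sum_(v in S) term S u v.
Proof. by []. Qed.

Lemma term_ge0 S u v : 0 <= term S u v.
Proof. rewrite /term; case: distS => // d; exact: exprz_ge0. Qed.

Lemma half_expz (d : nat) : (1 / 2 : rat) ^ (d%:Z - 1) = 2 * (1/2) ^+ d.
Proof.
rewrite expfzDr //= exprN1 invf_div divr1 mulrC //.
Qed.

Lemma dist_le S u v p : good_path e S u v u p ->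
  exists2 d, distS e S u v = Some d & (d <= size p)%N.
Proof.
move=> gp.
have hu : uniq (u :: p) by move: gp; rewrite /good_path => /and5P [_ _ _ hu /andP []].
have hN : (size p < #|T|)%N.
  have := card_uniqP hu; rewrite /= => h.
  by rewrite -h max_card.
have hP : has_good_path e S u v (size p).
  by apply/existsP; exists (in_tuple p).
rewrite /distS.
set k := find _ _.
have hk : (k <= size p)%N.
  rewrite leqNgt; apply/negP => /(before_find 0%N).
  by rewrite nth_iota // add0n hP.
exists k => //; by rewrite (leq_ltn_trans hk hN).
Qed.

Lemma term_ge S u v p : good_path e S u v u p ->
  2 * (1/2) ^+ (size p) <= term S u v.
Proof.
move=> /dist_le [d hd hle]; rewrite /term hd half_expz.
rewrite ler_pM2l //; apply: ler_wiXn2l => //.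
Qed.

Definition pval (p : seq T) : rat := 2 * (1/2) ^+ (size p).

Definition famP (S : {set T}) (y : T) (A : {set T}) (F : seq (seq T)) :=
  uniq (map (last y) F) /\
  forall p, p \in F -> [/\ p != [::], path e y p, uniq p,
      all (fun z => z \in A) p /\ (last y p \in S)
    & all (fun z => z \notin S) (internal y p)].

Definition LB (S : {set T}) (y : T) (A : {set T}) (q : rat) :=
  exists F, famP S y A F /\ q <= \sum_(p <- F) pval p.

Lemma sum_sub_le (A : {set T}) (s : seq T) (f : T -> rat) :
  uniq s -> {subset s <= A} -> (forall i, 0 <= f i) ->
  \sum_(i <- s) f i <= \sum_(i in A) f i.
Proof.
move=> us sA f0; rewrite big_uniq // (bigID (fun i => i \in s) (fun i => i \in A)) /=.
have -> : \sum_(i in A | i \in s) f i = \sum_(i in s) f i.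
  by apply: eq_bigl => i; rewrite /=; case: (boolP (i \in s)) => h; rewrite ?andbT ?andbF ?(sA _ h).
rewrite lerDl; apply: sumr_ge0 => i _; exact: f0.
Qed.

Lemma LB_weight S u A q : u \notin S -> u \notin A -> LB S u A q -> q <= weight e S u.
Proof.
move=> uS uA [F [[uF hF] hq]]; apply: (le_trans hq).
apply: (@le_trans _ _ (\sum_(p <- F) term S u (last u p))).
  rewrite big_seq [X in _ <= X]big_seq; apply: ler_sum => p pF; apply: term_ge.
  have [pn pp up [pA pl] pi] := hF p pF.
  apply/and5P; split=> //; first by rewrite /= up andbT; apply/negP => /(allP pA); rewrite (negPf uA).
  apply/andP; split=> //.
  have -> : [set u; last u p] :&: S = [set last u p].
    apply/setP => z; rewrite !inE; case: (eqVneq z u) => [->|zu]; first by rewrite (negPf uS) /=; apply/esym/eqP => h; move: pl; rewrite -h (negPf uS).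
    by rewrite /=; case: (eqVneq z (last u p)) => [->|]; rewrite ?pl.
  by rewrite cards1.
rewrite -(big_map (last u) xpredT (term S u)).
apply: sum_sub_le => //; last exact: term_ge0.
move=> z /mapP [p pF ->]; by have [_ _ _ [_ ->] _] := hF p pF.
Qed.

Lemma weight_inS S u : u \in S -> 1 <= weight e S u.
Proof.
move=> uS; rewrite weightE (bigD1 u) //=.
have -> : term S u u = 2.
  rewrite /term /distS.
  have hP : has_good_path e S u u 0.
    apply/existsP; exists [tuple]; rewrite /good_path /= eqxx /= setUid.
    by rewrite (setIidPl _) ?cards1 // sub1set.
  have hN : (0 < #|T|)%N by apply/card_gt0P; exists u.
  case: #|T| hN => // N _.
  by rewrite /= hP /= half_expz expr0 mulr1.
have h : 0 <= \sum_(i | (i \in S) && (i != u)) term S u i.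
  by apply: sumr_ge0 => i _; exact: term_ge0.
lra.
Qed.

Lemma LB0 S y A : LB S y A 0.
Proof. by exists [::]; split; [split=> // p; rewrite in_nil | rewrite big_nil]. Qed.

Lemma LB_le S y A q q' : q' <= q -> LB S y A q -> LB S y A q'.
Proof. move=> h [F [hF hq]]; exists F; split=> //; exact: le_trans h hq. Qed.

Lemma LB_sub S y A B q : A \subset B -> LB S y A q -> LB S y B q.
Proof.
move=> AB [F [[uF hF] hq]]; exists F; split=> //; split=> // p pF.
have [pn pp up [pA pl] pi] := hF p pF; split=> //; split=> //.
apply/allP => z /(allP pA); exact: (subsetP AB).
Qed.

Lemma LB_U S y (A1 A2 : {set T}) (q1 q2 : rat) : [disjoint A1 & A2] ->
  LB S y A1 q1 -> LB S y A2 q2 -> LB S y (A1 :|: A2) (q1 + q2).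
Proof.
move=> dA [F1 [[u1 h1] hq1]] [F2 [[u2 h2] hq2]].
exists (F1 ++ F2); split; last by rewrite big_cat /=; exact: lerD.
split.
  rewrite map_cat cat_uniq u1 u2 /= andbT; apply/hasPn => z /mapP [p pF ->].
  apply/negP => /mapP [p' pF' eqp].
  have [_ _ _ [pA _] _] := h2 p pF.
  have [p'n _ _ [pA' _] _] := h1 p' pF'.
  have [pn _ _ _ _] := h2 p pF.
  have zA2 : last y p \in A2.
    by case: p pn pA {pF eqp} => // a p _ /allP pA; apply: pA; rewrite /= mem_last.
  have zA1 : last y p' \in A1.
    by case: p' p'n pA' {pF' eqp} => // a p' _ /allP pA'; apply: pA'; rewrite /= mem_last.
  rewrite eqp in zA2.
  by move: dA => /disjoint_setI0 /setP /(_ (last y p')); rewrite !inE zA1 zA2.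
move=> p; rewrite mem_cat => /orP [] pF.
  have [pn pp up [pA pl] pi] := h1 p pF; split=> //; split=> //.
  by apply/allP => z /(allP pA); rewrite inE => ->.
have [pn pp up [pA pl] pi] := h2 p pF; split=> //; split=> //.
by apply/allP => z /(allP pA); rewrite inE orbC => ->.
Qed.

Lemma LB_1 S y A x : x \in S -> x \in A -> e y x -> LB S y A 1.
Proof.
move=> xS xA yx; exists [:: [:: x]]; split.
  split=> // p; rewrite inE => /eqP ->; split=> //=; first by rewrite yx.
  by rewrite xA.
by rewrite big_seq1 /pval /= expr1; lra.
Qed.

Lemma internal_cons y x p : p != [::] ->
  internal y (x :: p) = x :: internal x p.
Proof. by case: p. Qed.

Lemma LB_step S y A B x q : x \notin S -> x \in A -> e y x -> B \subset A ->
  x \notin B -> LB S x B q -> LB S y A (q / 2).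
Proof.
move=> xS xA yx BA xB [F [[uF hF] hq]].
exists (map (cons x) F); split.
  split.
    have -> : map (last y) (map (cons x) F) = map (last x) F.
      by rewrite -map_comp; apply: eq_map => p.
    by [].
  move=> p' /mapP [p pF ->].
  have [pn pp up [pA pl] pi] := hF p pF.
  split=> //=; first by rewrite yx.
  - rewrite up andbT; apply/negP => /(allP pA); by rewrite (negPf xB).
  - split=> //; rewrite xA /=; apply/allP => z /(allP pA); exact: (subsetP BA).
  - by rewrite internal_cons //= xS.
rewrite big_map.
have -> : \sum_(p <- F) pval (x :: p) = (\sum_(p <- F) pval p) / 2.
  rewrite mulr_suml; apply: eq_bigr => p _; rewrite /pval /= exprS; by field.
lra.
Qed.

Lemma LB_restrict (S1 S2 : {set T}) y A q : {in A, forall z, (z \in S1) = (z \in S2)} ->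
  LB S1 y A q -> LB S2 y A q.
Proof.
move=> hS [F [[uF hF] hq]]; exists F; split=> //; split=> // p pF.
have [pn pp up [pA pl] pi] := hF p pF.
have lA : last y p \in A.
  by case: p pn pA {pF pp up pl pi} => // a p _ /allP pA; apply: pA; rewrite /= mem_last.
split=> //; first by rewrite -hS.
apply/allP => z zi; have := allP pi z zi.
have zA : z \in A.
  apply: (allP pA); case: p pn zi {pF pp up pl pi pA lA} => // a p _.
  rewrite /internal /= => /mem_belast; by [].
by rewrite hS.
Qed.

End W.

Section Build.
Variables (T : finType) (g : rel T) (r : T).
Hypothesis g_sym : symmetric g.
Hypothesis g_conn : forall x, connect g r x.

Definition Dstep (A : {set T}) : {set T} := A :|: [set y | [exists x in A, g x y]].
Definition Dk k := iter k Dstep [set r].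

Lemma Dk_mono k m : k <= m -> Dk k \subset Dk m.
Proof.
move=> /subnKC <-; elim: (m - k) => [|n IH]; first by rewrite addn0.
rewrite addnS /Dk iterS; apply: subset_trans IH _; exact: subsetUl.
Qed.

Lemma Dk_step k x y : x \in Dk k -> g x y -> y \in Dk k.+1.
Proof. by move=> xD gxy; rewrite /Dk iterS inE; apply/orP; right; rewrite inE; apply/existsP; exists x; rewrite xD. Qed.

Lemma Dk_path a p k : a \in Dk k -> path g a p -> last a p \in Dk (k + size p).
Proof.
elim: p a k => [|b p IH] a k /=; first by rewrite addn0.
move=> aD /andP [gab pp]; rewrite addnS -addSn; apply: IH => //; exact: Dk_step aD gab.
Qed.

Lemma Dk_all x : exists k, x \in Dk k.
Proof.
have /connectP [p pp ->] := g_conn x.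
exists (0 + size p); apply: Dk_path => //; by rewrite /Dk /= inE.
Qed.

Definition depth x : nat := ex_minn (Dk_all x).

Lemma depth_in x : x \in Dk (depth x).
Proof. by rewrite /depth; case: ex_minnP. Qed.

Lemma depth_min x k : x \in Dk k -> depth x <= k.
Proof. by rewrite /depth; case: ex_minnP => m _ h /h. Qed.

Lemma depth_r : depth r = 0.
Proof. by apply/eqP; rewrite -leqn0; apply: depth_min; rewrite /Dk /= inE. Qed.

Lemma depth_pos x : x != r -> 0 < depth x.
Proof.
move=> xr; rewrite lt0n; apply/negP => /eqP h.
by have := depth_in x; rewrite h /Dk /= inE (negPf xr).
Qed.

Lemma depth_prev x : x != r -> exists y, g x y && ((depth y).+1 == depth x).
Proof.
move=> xr; have dp := depth_pos xr.
have xD := depth_in x.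
case E: (depth x) dp xD => [|k] // _.
rewrite /Dk iterS inE => /orP [] h.
  by have := depth_min h; rewrite E ltnn.
move: h; rewrite inE => /existsP [y /andP [yD gyx]].
exists y; rewrite g_sym gyx /=.
have h1 := depth_min yD.
have h2 : depth x <= (depth y).+1 by apply: depth_min; exact: Dk_step (depth_in y) gyx.
apply/eqP; lia.
Qed.

Definition par x : T :=
  if x == r then r else odflt x [pick y | g x y && ((depth y).+1 == depth x)].

Lemma par_spec x : x != r -> g x (par x) && ((depth (par x)).+1 == depth x).
Proof.
move=> xr; rewrite /par (negPf xr).
case: pickP => [y -> //|h]; have [y hy] := depth_prev xr; by rewrite h in hy.
Qed.

End Build.

Section Tree.
Variables (T : finType) (g : rel T) (r : T) (par : T -> T) (depth : T -> nat).
Hypothesis hr0 : depth r = 0.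
Hypothesis hpar : forall x, x != r -> g x (par x) && ((depth (par x)).+1 == depth x).

Lemma depth_par x : x != r -> (depth (par x)).+1 = depth x.
Proof. by move/hpar/andP => [_ /eqP]. Qed.

Lemma g_par x : x != r -> g x (par x).
Proof. by move/hpar/andP => []. Qed.

Lemma depth0 x : depth x = 0 -> x = r.
Proof. move=> h; apply/eqP; apply/negPn/negP => /depth_par; by rewrite h. Qed.

Lemma depth_iter k u : k <= depth u -> depth (iter k par u) = depth u - k.
Proof.
elim: k => [|k IH] hk; first by rewrite subn0.
rewrite iterS; have h := IH (ltnW hk).
have nr : iter k par u != r by apply/eqP => e; move: h; rewrite e hr0; lia.
have := depth_par nr; rewrite h; lia.
Qed.

Definition desc v := [set u | (depth v <= depth u) && (iter (depth u - depth v) par u == v)].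
Definition children v := [set c | (c != r) && (par c == v)].

Lemma desc_refl v : v \in desc v.
Proof. by rewrite inE leqnn subnn /=. Qed.

Lemma child_depth c v : c \in children v -> depth c = (depth v).+1.
Proof. by rewrite inE => /andP [cr /eqP <-]; rewrite depth_par. Qed.

Lemma child_desc c v : c \in children v -> desc c \subset desc v.
Proof.
move=> cv; have dc := child_depth cv.
move: cv; rewrite inE => /andP [cr /eqP pc].
apply/subsetP => u; rewrite !inE => /andP [h1 /eqP h2].
have -> : depth u - depth v = (depth u - depth c).+1 by lia.
by rewrite iterS h2 pc eqxx andbT; lia.
Qed.

Lemma child_notin c v : c \in children v -> v \notin desc c.
Proof. move/child_depth => h; rewrite inE h ltnn //. Qed.

Lemma desc_split u v : u \in desc v -> u != v -> exists2 c, c \in children v & u \in desc c.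
Proof.
rewrite inE => /andP [h1 /eqP h2] uv.
have hk : 0 < depth u - depth v.
  rewrite subn_gt0 ltn_neqAle h1 andbT; apply/negP => /eqP e.
  by move: h2; rewrite e subnn /= => h; rewrite h eqxx in uv.
set k := depth u - depth v in hk h2.
exists (iter k.-1 par u).
  have hd : depth (iter k.-1 par u) = (depth v).+1 by rewrite depth_iter; rewrite /k; lia.
  rewrite inE; apply/andP; split.
    by apply/eqP => e; move: hd; rewrite e hr0.
  by rewrite -iterS prednK // h2.
rewrite inE depth_iter; last by rewrite /k; lia.
have -> : depth u - (depth u - k.-1) = k.-1 by rewrite /k; lia.
by rewrite eqxx andbT leq_subr.
Qed.

Lemma desc_disj c1 c2 v : c1 \in children v -> c2 \in children v -> c1 != c2 ->
  [disjoint desc c1 & desc c2].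
Proof.
move=> h1 h2 ne; apply/pred0P => u /=; apply/negP => /andP [].
rewrite !inE (child_depth h1) (child_depth h2) => /andP [_ /eqP e1] /andP [_ /eqP e2].
by rewrite -e1 -e2 eqxx in ne.
Qed.

Lemma desc_root : desc r = setT.
Proof.
apply/setP => u; rewrite !inE hr0 subn0 /=.
apply/eqP; apply: depth0; rewrite depth_iter // subnn //.
Qed.

Lemma par_notin v : v != r -> par v \notin desc v.
Proof. move=> vr; rewrite inE -(depth_par vr) ltnn //. Qed.

Lemma card_desc_child c v : c \in children v -> #|desc c| < #|desc v|.
Proof.
move=> cv; have sub := child_desc cv.
rewrite (cardsD1 v (desc v)) desc_refl add1n ltnS; apply: subset_leq_card.
apply/subsetP => u uc; rewrite in_setD1 (subsetP sub _ uc) andbT.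
apply/eqP => e; move: uc; rewrite e; apply/negP; exact: child_notin.
Qed.

Lemma children_g c v : c \in children v -> g c v.
Proof. by rewrite inE => /andP [cr /eqP <-]; exact: g_par. Qed.

Lemma desc_children u v : (u \in desc v) = (u == v) || [exists c in children v, u \in desc c].
Proof.
case: (eqVneq u v) => [->|uv]; first by rewrite desc_refl.
apply/idP/existsP => [h | [c /andP [cv uc]]].
  by have [c cv uc] := desc_split h uv; exists c; rewrite cv.
exact: (subsetP (child_desc cv)).
Qed.

End Tree.

Section DP.
Variables (T : finType) (e : rel T) (g : rel T) (r : T) (par : T -> T) (depth : T -> nat).
Hypothesis e_sym : symmetric e.
Hypothesis gsub : forall x y, g x y -> e x y.
Hypothesis hr0 : depth r = 0.
Hypothesis hpar : forall x, x != r -> g x (par x) && ((depth (par x)).+1 == depth x).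

Local Notation desc := (desc par depth).
Local Notation children := (children r par).
Local Notation LB := (LB e).

Local Open Scope ring_scope.

Definition q4 (n : nat) : rat := n%:R / 4.

Definition agree (S1 S2 D : {set T}) := {in D, forall z, (z \in S1) = (z \in S2)}.

Definition Req v (S0 : {set T}) (q : rat) :=
  forall S' : {set T}, agree S' S0 (desc v) -> LB S' v (~: desc v) q ->
  forall u, u \in desc v -> 1 <= weight e S' u.

Definition ClaimOK v (c : nat * nat * nat) :=
  let: (o, rr, E) := c in
  exists S : {set T}, [/\ S \subset desc v, (3 * #|S| + 3 <= #|desc v| + E)%N,
     (v != r -> LB S (par v) (desc v) (q4 o)) & Req v S (q4 rr)].

Definition SReq v (D S0 : {set T}) (rr : nat) :=
  forall S' : {set T}, agree S' S0 D ->
  (v \in S' \/ exists B q, [/\ v \notin S', LB S' v B q, [disjoint B & D], v \notin B & q4 rr <= q / 2]) ->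
  forall u, u \in D -> 1 <= weight e S' u.

Definition Slot v (D S0 : {set T}) (c : nat * nat * nat) :=
  let: (o, rr, E) := c in
  [/\ S0 \subset D, v \notin D, (3 * #|S0| + 3 <= #|D| + E)%N,
     (forall S' : {set T}, agree S' S0 D -> LB S' v D (q4 o)) & SReq v D S0 rr].

Definition cond (b : bool) (c1 c2 c : nat * nat * nat) : bool :=
  let: (o1, r1, E1) := c1 in let: (o2, r2, E2) := c2 in let: (o, rr, E) := c in
  if b then (3 + E1 + E2 <= E + 4)%N && (o <= 4)%N
  else [&& (E1 + E2 <= E + 4)%N, (2 * o <= o1 + o2)%N, (4 <= o1 + o2 + rr)%N,
           (2 * r1 <= o2 + rr)%N & (2 * r2 <= o1 + rr)%N].

Lemma q4D a b : q4 a + q4 b = q4 (a + b).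
Proof. by rewrite /q4 natrD mulrDl. Qed.

Lemma q4_le a b : (a <= b)%N -> q4 a <= q4 b.
Proof. by move=> h; rewrite /q4 ler_pM2r // ler_nat. Qed.

Lemma q4_ge0 a : 0 <= q4 a.
Proof. by rewrite /q4 divr_ge0. Qed.

Lemma q4_4 : q4 4 = 1.
Proof. by rewrite /q4 divff. Qed.

Lemma agree_refl S D : agree S S D.
Proof. by []. Qed.

Lemma empty_slot v : Slot v set0 set0 (0%N, 0%N, 3%N).
Proof.
split=> //; rewrite ?sub0set ?inE ?cards0 //.
- move=> S' _; rewrite /q4 mul0r; exact: LB0.
- by move=> S' _ _ u; rewrite inE.
Qed.


Lemma child_slot v c o rr E : c \in children v -> (rr <= 4)%N ->
  ClaimOK c (o, rr, E) -> exists S, Slot v (desc c) S (o, rr, E).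
Proof.
move=> cv hr [S [sub hc out req]]; exists S.
have cr : c != r by move: cv; rewrite inE => /andP [].
have pc : par c = v by move: cv; rewrite inE => /andP [_ /eqP].
have ecv : e c v by apply: gsub; exact: (children_g hpar cv).
have vnc : v \in ~: desc c by rewrite inE (child_notin hpar cv).
split=> //.
- exact: (child_notin hpar cv).
- move=> S' ag; rewrite -pc; apply: (LB_restrict (S1 := S)) (out cr).
  by move=> z zD; rewrite ag.
- move=> S' ag [vS | [B [q [vS lb dis vB hq]]]] u uc; apply: (req S' ag) => //.
  + apply: LB_le (LB_1 vS vnc ecv).
    by rewrite -q4_4; apply: q4_le.
  + apply: LB_le hq _; apply: LB_step vS vnc ecv _ vB lb.
    by rewrite -disjoints_subset.
Qed.

Definition mkS (b : bool) (v : T) (S1 S2 : {set T}) :=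
  (if b then [set v] else set0) :|: (S1 :|: S2).

Lemma mem_mkS b v S1 S2 z : (z \in mkS b v S1 S2) = (b && (z == v)) || (z \in S1) || (z \in S2).
Proof. by rewrite /mkS !inE; case: b; rewrite ?inE ?orbA. Qed.

Lemma arithT (s s1 s2 d1 d2 e1 e2 E : nat) : (3 + e1 + e2 <= E + 4)%N ->
  (s <= true + s1 + s2)%N -> (3 * s1 + 3 <= d1 + e1)%N -> (3 * s2 + 3 <= d2 + e2)%N ->
  (3 * s + 3 <= (d1 + d2).+1 + E)%N.
Proof. move=> /= *; lia. Qed.

Lemma arithF (s s1 s2 d1 d2 e1 e2 E : nat) : (e1 + e2 <= E + 4)%N ->
  (s <= false + s1 + s2)%N -> (3 * s1 + 3 <= d1 + e1)%N -> (3 * s2 + 3 <= d2 + e2)%N ->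
  (3 * s + 3 <= (d1 + d2).+1 + E)%N.
Proof. move=> /= *; lia. Qed.

Lemma node v (D1 D2 S1 S2 : {set T}) (b : bool) (c1 c2 c : nat * nat * nat) : [disjoint D1 & D2] -> desc v = v |: (D1 :|: D2) ->
  Slot v D1 S1 c1 -> Slot v D2 S2 c2 -> cond b c1 c2 c -> ClaimOK v c.
Proof.
case: c1 => [[o1 r1] E1]; case: c2 => [[o2 r2] E2]; case: c => [[o rr] E].
move=> dis dv [sub1 vD1 card1 out1 req1] [sub2 vD2 card2 out2 req2] hcond.
pose S := mkS b v S1 S2.
have vdesc : v \in desc v by rewrite dv setU11.
have D1d : D1 \subset desc v by rewrite dv; apply/subsetP => z z1; rewrite !inE z1 orbT.
have D2d : D2 \subset desc v by rewrite dv; apply/subsetP => z z2; rewrite !inE z2 !orbT.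
have ag1 : forall S', agree S' S (desc v) -> agree S' S1 D1.
  move=> S' ag z z1; rewrite ag ?(subsetP D1d) // mem_mkS.
  have zv : (z == v) = false by apply/negP => /eqP e1; subst z; by rewrite z1 in vD1.
  have zS2 : (z \in S2) = false.
    apply/negP => /(subsetP sub2) z2; move: dis => /disjoint_setI0 /setP /(_ z).
    by rewrite !inE z1 z2.
  by rewrite zv zS2 andbF orbF.
have ag2 : forall S', agree S' S (desc v) -> agree S' S2 D2.
  move=> S' ag z z2; rewrite ag ?(subsetP D2d) // mem_mkS.
  have zv : (z == v) = false by apply/negP => /eqP e1; subst z; by rewrite z2 in vD2.
  have zS1 : (z \in S1) = false.
    apply/negP => /(subsetP sub1) z1; move: dis => /disjoint_setI0 /setP /(_ z).
    by rewrite !inE z1 z2.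
  by rewrite zv zS1 andbF.
have agv : forall S', agree S' S (desc v) -> (v \in S') = b.
  move=> S' ag; rewrite ag // mem_mkS eqxx andbT.
  have h1 : (v \in S1) = false by apply/negP => /(subsetP sub1); rewrite (negPf vD1).
  have h2 : (v \in S2) = false by apply/negP => /(subsetP sub2); rewrite (negPf vD2).
  by rewrite h1 h2 !orbF.
have disv : [disjoint D1 :|: D2 & ~: desc v].
  by rewrite disjoints_subset setCK; apply/subsetP => z; rewrite inE => /orP [] h;
    [exact: (subsetP D1d) | exact: (subsetP D2d)].
have vnot : v \notin (D1 :|: D2) :|: ~: desc v by rewrite !in_setU in_setC vdesc (negPf vD1) (negPf vD2).
have vnot12 : v \notin D1 :|: D2 by rewrite !inE (negPf vD1) (negPf vD2).
exists S; split.
- apply/subsetP => z; rewrite mem_mkS => /orP [/orP [|]|].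
  + by case/andP => _ /eqP ->.
  + by move=> h; apply: (subsetP D1d); exact: (subsetP sub1).
  + by move=> h; apply: (subsetP D2d); exact: (subsetP sub2).
- have cS : (#|S| <= b + #|S1| + #|S2|)%N.
    rewrite /S /mkS cardsU; apply: leq_trans (leq_subr _ _) _.
    rewrite cardsU -addnA leq_add //; first by case: (b); rewrite ?cards1 ?cards0.
    exact: leq_subr.
  have cD : #|desc v| = (#|D1| + #|D2|).+1.
    rewrite dv cardsU1 vnot12 cardsU (disjoint_setI0 dis) cards0 subn0 //.
  rewrite cD; move: hcond cS; case: (b) => /= hc cS.
    move: hc => /andP [hE _]; exact: arithT hE cS card1 card2.
  move: hc => /and5P [hE _ _ _ _]; exact: arithF hE cS card1 card2.
- move=> vr.
  have epv : e (par v) v by rewrite e_sym; apply: gsub; have := g_par hpar vr.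
  move: hcond agv; case: (b) => hc agv.
    have vS : v \in S by rewrite (agv S (@agree_refl S (desc v))).
    move: hc => /andP [_ ho]; apply: LB_le (LB_1 vS vdesc epv).
    by rewrite -q4_4; apply: q4_le.
  have vS : v \notin S by rewrite (agv S (@agree_refl S (desc v))).
  move: hc => /and5P [_ ho _ _ _].
  have lb := LB_U dis (out1 S (ag1 S (@agree_refl S (desc v)))) (out2 S (ag2 S (@agree_refl S (desc v)))).
  apply: LB_le (LB_step vS vdesc epv _ vnot12 lb).
    rewrite q4D /q4; have : ((2 * o)%:R <= (o1 + o2)%:R :> rat) by rewrite ler_nat.
    rewrite natrM; lra.
  by rewrite dv; apply/subsetP => z zD; rewrite inE zD orbT.
- move=> S' ag lbin u; rewrite {1}dv !inE => /orP [/eqP -> | /orP [] uD].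
  + move: hcond agv; case: (b) => hc agv; first by apply: weight_inS; rewrite agv.
    have vS : v \notin S' by rewrite agv.
    move: hc => /and5P [_ _ h4 _ _].
    have lb := LB_U disv (LB_U dis (out1 S' (ag1 S' ag)) (out2 S' (ag2 S' ag))) lbin.
    apply: le_trans (LB_weight vS vnot lb).
    rewrite !q4D -q4_4; exact: q4_le.
  + apply: (req1 S' (ag1 S' ag)) => //.
    move: hcond agv; case: (b) => hc agv; first by left; rewrite agv.
    right; move: hc => /and5P [_ _ _ h _].
    exists (D2 :|: ~: desc v), (q4 o2 + q4 rr); split.
    * by rewrite agv.
    * apply: LB_U => //; last exact: out2 S' (ag2 S' ag).
      by rewrite disjoints_subset setCK.
    * rewrite disjoint_sym disjoints_subset; apply/subsetP => z z1.
      rewrite in_setC in_setU in_setC (subsetP D1d _ z1) orbF.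
      by apply/negP => z2; move: dis => /disjoint_setI0 /setP /(_ z); rewrite !inE z1 z2.
    * by rewrite in_setU in_setC vdesc (negPf vD2).
    * rewrite q4D /q4; have : ((2 * r1)%:R <= (o2 + rr)%:R :> rat) by rewrite ler_nat.
      rewrite natrM; lra.
  + apply: (req2 S' (ag2 S' ag)) => //.
    move: hcond agv; case: (b) => hc agv; first by left; rewrite agv.
    right; move: hc => /and5P [_ _ _ _ h].
    exists (D1 :|: ~: desc v), (q4 o1 + q4 rr); split.
    * by rewrite agv.
    * apply: LB_U => //; last exact: out1 S' (ag1 S' ag).
      by rewrite disjoints_subset setCK.
    * rewrite disjoint_sym disjoints_subset; apply/subsetP => z z2.
      rewrite in_setC in_setU in_setC (subsetP D2d _ z2) orbF.
      by apply/negP => z1; move: dis => /disjoint_setI0 /setP /(_ z); rewrite !inE z1 z2.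
    * by rewrite in_setU in_setC vdesc (negPf vD1).
    * rewrite q4D /q4; have : ((2 * r2)%:R <= (o1 + rr)%:R :> rat) by rewrite ler_nat.
      rewrite natrM; lra.
Qed.

End DP.

Definition Cl : seq (seq (nat * nat * nat)) :=
  [:: [:: (0, 4, 2); (4, 0, 5)]; [:: (4, 0, 3)]; [:: (4, 0, 4)]; [:: (2, 0, 3); (4, 0, 6)]]%N.
Definition Zp : seq (nat * nat * nat) := [:: (0, 0, 3)]%N.
Definition Ps := Cl ++ [:: Zp].

Definition check_ok : bool :=
  all (fun i => all (fun j => has (fun k => all (fun c =>
     has (fun b => has (fun c1 => has (fun c2 => cond b c1 c2 c)
        (nth [::] Ps j)) (nth [::] Ps i)) [:: true; false])
     (nth [::] Cl k)) (iota 0 4)) (iota 0 5)) (iota 0 5).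

Lemma check_true : check_ok.
Proof. by vm_compute. Qed.

Definition rcheck : bool := all (all (fun c => c.1.2 <= 4)) Cl.
Lemma rcheck_true : rcheck. Proof. by []. Qed.

Definition root_ok : bool :=
  all (fun i => has (fun b => has (fun c1 => cond b c1 (0, 0, 3) (0, 0, 5))
    (nth [::] Ps i)) [:: true; false]) (iota 0 5).
Lemma root_true : root_ok. Proof. by vm_compute. Qed.

Section Main.
Variables (T : finType) (e : rel T) (g : rel T) (r : T) (par : T -> T) (depth : T -> nat).
Hypothesis e_sym : symmetric e.
Hypothesis gsub : forall x y, g x y -> e x y.
Hypothesis hr0 : depth r = 0.
Hypothesis hpar : forall x, x != r -> g x (par x) && ((depth (par x)).+1 == depth x).
Hypothesis hch : forall v, v != r -> #|children r par v| <= 2.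
Hypothesis hroot : #|children r par r| <= 1.

Local Notation desc := (desc par depth).
Local Notation children := (children r par).
Local Notation ClaimOK := (ClaimOK e r par depth).
Local Notation Slot := (Slot e).

Definition Good v i := forall c, c \in nth [::] Cl i -> ClaimOK v c.
Definition SlotP v (D : {set T}) i := forall c, c \in nth [::] Ps i -> exists S, Slot v D S c.

Lemma slot_of_child v c i : c \in children v -> i < 4 -> Good c i -> SlotP v (desc c) i.
Proof.
move=> cv hi gd cl; rewrite /Ps nth_cat (_ : i < size Cl = true) // => hc.
case: cl hc => [[o rr] E] hc.
apply: (child_slot gsub hpar cv); last exact: gd.
have := rcheck_true; rewrite /rcheck => /allP /(_ (nth [::] Cl i)).
rewrite mem_nth // => /(_ isT) /allP /(_ _ hc) //.
Qed.

Lemma slot_empty v : SlotP v set0 4.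
Proof.
move=> cl; rewrite /Ps nth_cat /= inE => /eqP ->; exists set0; exact: empty_slot.
Qed.

Lemma structure v : #|children v| <= 2 ->
  (forall c, c \in children v -> exists2 i, i < 4 & Good c i) ->
  exists (D1 D2 : {set T}) i j, [/\ i < 5, j < 5, [disjoint D1 & D2],
     desc v = v |: (D1 :|: D2) & [/\ SlotP v D1 i, SlotP v D2 j & (#|children v| <= 1 -> j = 4)]].
Proof.
move=> hc hg.
have dch := desc_children hr0 hpar.
case E: #|children v| hc => [|[|[|//]]] _.
- exists set0, set0, 4, 4; split=> //; last by split=> //; exact: slot_empty.
    by rewrite disjoints_subset sub0set.
  apply/setP => u; rewrite dch in_setU1 setU0 in_set0 orbF.
  case: existsP => [[c]|]; last by rewrite orbF.
  by rewrite (cards0_eq E) in_set0.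
- have /cards1P [c ch] : #|children v| == 1 by rewrite E.
  have cv : c \in children v by rewrite ch set11.
  have [i hi gi] := hg c cv.
  exists (desc c), set0, i, 4; split.
  + by apply: ltn_trans hi _.
  + by [].
  + by rewrite disjoints_subset setC0 subsetT.
  + apply/setP => u; rewrite dch ch in_setU1 setU0.
    congr (_ || _); apply/existsP/idP => [[c' /andP [] ]|h].
      by rewrite inE => /eqP ->.
    by exists c; rewrite inE eqxx h.
  + by split=> //; [exact: slot_of_child cv hi gi | exact: slot_empty].
- have /cards2P [c1 [c2 [ne ch]]] : #|children v| == 2 by rewrite E.
  have cv1 : c1 \in children v by rewrite ch !inE eqxx.
  have cv2 : c2 \in children v by rewrite ch !inE eqxx orbT.
  have [i hi gi] := hg c1 cv1.
  have [j hj gj] := hg c2 cv2.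
  exists (desc c1), (desc c2), i, j; split.
  + by apply: ltn_trans hi _.
  + by apply: ltn_trans hj _.
  + by have := desc_disj hpar cv1 cv2 ne.
  + apply/setP => u; rewrite dch in_setU1 in_setU.
    congr (_ || _); apply/existsP/idP => [[c' /andP []]|/orP [] h].
      by rewrite ch !inE => /orP [] /eqP -> ->; rewrite ?orbT.
      by exists c1; rewrite cv1 h.
    by exists c2; rewrite cv2 h.
  + by split; [exact: slot_of_child cv1 hi gi | exact: slot_of_child cv2 hj gj | done].
Qed.

Lemma node_good v (D1 D2 : {set T}) i j : i < 5 -> j < 5 -> [disjoint D1 & D2] ->
  desc v = v |: (D1 :|: D2) -> SlotP v D1 i -> SlotP v D2 j ->
  exists2 k, k < 4 & Good v k.
Proof.
move=> hi hj dis dv s1 s2.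
have h := check_true; rewrite /check_ok in h.
have hi' : i \in iota 0 5 by rewrite mem_iota add0n.
have hj' : j \in iota 0 5 by rewrite mem_iota add0n.
have /allP h2 := allP h i hi'.
have /hasP [k] := h2 j hj'.
rewrite mem_iota add0n => hk /allP hall; exists k => // c hc.
have /hasP [b _ /hasP [c1 c1P /hasP [c2 c2P hcond]]] := hall c hc.
have [S1 sl1] := s1 c1 c1P; have [S2 sl2] := s2 c2 c2P.
by have := node e_sym gsub hr0 hpar dis dv sl1 sl2 hcond.
Qed.

Lemma main_ind v : v != r -> exists2 k, k < 4 & Good v k.
Proof.
have [n] := ubnP #|desc v|; elim: n v => // n IH v hn vr.
have hg : forall c, c \in children v -> exists2 i, i < 4 & Good c i.
  move=> c cv; apply: IH; first exact: leq_trans (card_desc_child hr0 hpar cv) (ltnSE hn).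
  by move: cv; rewrite inE => /andP [].
have [D1 [D2 [i [j [hi hj dis dv [s1 s2 _]]]]]] := structure (hch vr) hg.
exact: node_good hi hj dis dv s1 s2.
Qed.

Lemma root_claim : ClaimOK r (0, 0, 5).
Proof.
have hg : forall c, c \in children r -> exists2 i, i < 4 & Good c i.
  by move=> c; rewrite inE => /andP [cr _]; exact: main_ind.
have h2 : #|children r| <= 2 by apply: leq_trans hroot _.
have [D1 [D2 [i [j [hi hj dis dv [s1 s2 hj4]]]]]] := structure h2 hg.
have j4 := hj4 hroot; subst j.
have h := root_true; rewrite /root_ok in h.
have hi' : i \in iota 0 5 by rewrite mem_iota add0n.
have /hasP [b _ /hasP [c1 c1P hcond]] := allP h i hi'.
have [S1 sl1] := s1 c1 c1P.
have [S2 sl2] := s2 (0, 0, 3) (mem_head _ _).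
by have := node e_sym gsub hr0 hpar dis dv sl1 sl2 hcond.
Qed.


Lemma final_main : exists S : {set T}, exp_dominating e S /\ 3 * #|S| <= #|T| + 2.
Proof.
have [S [sub hc _ req]] := root_claim.
have dr := desc_root hr0 hpar.
exists S; split.
  move=> u; apply: (req S (@agree_refl _ S (desc r))); last by rewrite dr inE.
  have -> : q4 0 = 0%R by rewrite /q4 mul0r.
  exact: LB0.
move: hc; rewrite dr cardsT; lia.
Qed.

End Main.

Unset Implicit Arguments. Set Strict Implicit. Set Printing Implicit Defensive.

Theorem theorem3 (T : finType) (e : rel T)
  (e_sym : symmetric e) (e_irr : irreflexive e)
  (e_conn : forall x y : T, connect e x y)
  (e_deg : forall x : T, #|[set y | e x y]| <= 3) :
  exists S : {set T}, exp_dominating e S /\ 3 * #|S| <= #|T| + 2.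
Proof.
case: (pickP (fun _ : T => true)) => [r0 _|hT]; last first.
  by exists set0; split; [move=> u; have := hT u | rewrite cards0].
have c0 : forall x, connect e r0 x := fun x => e_conn r0 x.
pose d0 := depth c0; pose p0 := par c0.
have hp0 : forall x, x != r0 -> e x (p0 x) && ((d0 (p0 x)).+1 == d0 x).
  by move=> x hx; have := par_spec e_sym c0 hx.
have hd0 : d0 r0 = 0 := depth_r c0.
pose t : rel T := fun x y => ((x != r0) && (p0 x == y)) || ((y != r0) && (p0 y == x)).
have t_sym : symmetric t by move=> x y; rewrite /t orbC.
have tsub : forall x y, t x y -> e x y.
  move=> x y /orP [] /andP [hx /eqP <-]; have /andP [h _] := hp0 _ hx => //.
  by rewrite e_sym.
have cr0 : forall x, connect t r0 x.
  move=> x; have [n] := ubnP (d0 x); elim: n x => // n IH x hn.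
  case: (eqVneq x r0) => [->|xr]; first exact: connect0.
  have /andP [_ /eqP hd] := hp0 _ xr.
  apply: connect_trans (IH (p0 x) _) _; first by rewrite -ltnS hd.
  by apply: connect1; rewrite /t xr eqxx orbT.
pose l := [arg max_(x > r0) d0 x].
have lmax : forall y, d0 y <= d0 l by rewrite /l; case: arg_maxnP => // x _ h y; exact: h.
have tl : forall y, t l y -> y = p0 l.
  move=> y /orP [/andP [_ /eqP] //| /andP [yr /eqP hy]].
  have /andP [_ /eqP hd] := hp0 _ yr; have := lmax y; rewrite -hd hy; lia.
have tconn : forall x, connect t l x.
  move=> x; apply: connect_trans (cr0 x).
  by rewrite (sym_connect_sym t_sym); exact: cr0.
pose d2 := depth tconn; pose p2 := par tconn.
have hp2 : forall x, x != l -> t x (p2 x) && ((d2 (p2 x)).+1 == d2 x).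
  by move=> x hx; have := par_spec t_sym tconn hx.
have hd2 : d2 l = 0 := depth_r tconn.
have hch : forall v, v != l -> #|children l p2 v| <= 2.
  move=> v vl.
  pose N := [set y | t v y].
  have hN : #|N| <= 3.
    apply: leq_trans (e_deg v); apply: subset_leq_card; apply/subsetP => y.
    by rewrite !inE => /tsub.
  have pN : p2 v \in N by rewrite inE; have /andP [] := hp2 _ vl.
  have sub : children l p2 v \subset N :\ p2 v.
    apply/subsetP => c; rewrite inE => /andP [cl /eqP pc].
    rewrite !inE t_sym; have /andP [tc /eqP hdc] := hp2 _ cl; rewrite pc in tc hdc.
    rewrite tc andbT; apply/eqP => ec; subst c.
    have /andP [_ /eqP hdv] := hp2 _ vl; lia.
  have := subset_leq_card sub; rewrite (cardsD1 (p2 v) N) pN in hN; lia.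
have hroot : #|children l p2 l| <= 1.
  have sub : children l p2 l \subset [set p0 l].
    apply/subsetP => c; rewrite [c \in children _ _ _]inE => /andP [cl /eqP pc].
    have /andP [tc _] := hp2 _ cl; rewrite pc t_sym in tc.
    by rewrite inE (tl _ tc).
  by have := subset_leq_card sub; rewrite cards1.
exact: final_main e_sym tsub hd2 hp2 hch hroot.
Qed.
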